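(* If the alphabet $\mathcal{A}\subset\mathbb{N}$ contains $1$ and $2$, then the semigroup $\Gamma_{\mathcal{A}}$ has everywhere strong approximation.
   Context: For $a\in\mathbb{N}$ let $\gamma_a=\begin{pmatrix}0&1\\1&a\end{pmatrix}$. $\Gamma_{\mathcal{A}}\subset\mathrm{SL}_2(\mathbb{Z})$ is the semigroup generated by the products $\gamma_a\gamma_{a'}$, $a,a'\in\mathcal{A}$. $\Gamma_{\mathcal{A}}$ has everywhere strong approximation if for every $q\in\mathbb{N}$ the reduction of $\Gamma_{\mathcal{A}}$ modulo $q$ equals $\mathrm{SL}_2(\mathbb{Z}/q\mathbb{Z})$. *)

(* Defs.v *)
From mathcomp Require Import all_boot all_order all_algebra.
Set Implicit Arguments. Unset Strict Implicit. Unset Printing Implicit Defensive.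
Import GRing.Theory Num.Theory.
Local Open Scope ring_scope.

Definition gamma (a : nat) : 'M[int]_2 :=
  \matrix_(i < 2, j < 2)
    if (i == 0 :> nat) && (j == 0 :> nat) then 0
    else if (i == 1 :> nat) && (j == 1 :> nat) then (a%:Z)
    else 1.

Inductive in_GammaA (A : nat -> Prop) : 'M[int]_2 -> Prop :=
| GammaA_gen a a' : A a -> A a' -> in_GammaA A (gamma a *m gamma a')
| GammaA_mul g h : in_GammaA A g -> in_GammaA A h -> in_GammaA A (g *m h).

Definition red_mod (q : nat) (g : 'M[int]_2) : 'M['Z_q]_2 :=
  map_mx (fun z : int => z%:~R) g.

(* Everywhere strong approximation: for every modulus q, the reduction of
   Gamma_A mod q is exactly SL_2(Z/qZ).  (q = 1 is trivial and 'Z_1 is not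
   Z/1Z in MathComp, so it is excluded.) *)
Definition everywhere_strong_approx (A : nat -> Prop) : Prop :=
  forall q : nat, (1 < q)%N ->
    forall M : 'M['Z_q]_2,
      (\det M = 1) <-> (exists g, in_GammaA A g /\ red_mod q g = M).

(* Main.v *)
Require Import Defs.
From mathcomp Require Import all_boot all_order all_algebra.
From mathcomp Require Import ring zify.
Set Implicit Arguments. Unset Strict Implicit. Unset Printing Implicit Defensive.
Import GRing.Theory Num.Theory.
Local Open Scope ring_scope.

Section M22.
Variable R : comNzRingType.

Lemma mx22P (M N : 'M[R]_2) : M 0 0 = N 0 0 -> M 0 1 = N 0 1 -> M 1 0 = N 1 0 -> M 1 1 = N 1 1 -> M = N.
Proof.
move=> h1 h2 h3 h4; apply/matrixP => i j.
have E : forall k : 'I_2, k = 0 \/ k = 1.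
  by case=> [[|[|k]] Hk] //; [left|right]; apply: val_inj.
by case: (E i) => ->; case: (E j) => ->.
Qed.

Lemma det22 (M : 'M[R]_2) : \det M = M 0 0 * M 1 1 - M 0 1 * M 1 0.
Proof.
rewrite (expand_det_row _ 0) !big_ord_recl big_ord0 /cofactor !det_mx11 !mxE /=.
rewrite addr0 expr0 expr1 mul1r; congr (_ + _).
- congr (_ * _); congr (M _ _); apply: val_inj => /=; try rewrite /bump //.
- rewrite mulN1r mulrN; congr (- (_ * _)); congr (M _ _); apply: val_inj => /=.
  all: try rewrite /bump //.

Qed.

Lemma mul22 (M N : 'M[R]_2) i j : (M *m N) i j = M i 0 * N 0 j + M i 1 * N 1 j.
Proof.
rewrite mxE !big_ord_recl big_ord0 addr0 (_ : lift ord0 ord0 = 1 :> 'I_2) //.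
by apply: val_inj.
Qed.

End M22.

Section Gen.
Variable R : comNzRingType.

Definition mk22 (a b c d : R) : 'M[R]_2 :=
  \matrix_(i < 2, j < 2) if i == 0 then (if j == 0 then a else b) else (if j == 0 then c else d).

Lemma mk22E a b c d : [/\ mk22 a b c d 0 0 = a, mk22 a b c d 0 1 = b, mk22 a b c d 1 0 = c & mk22 a b c d 1 1 = d].
Proof. by rewrite !mxE. Qed.

Lemma mk00 a b c d : mk22 a b c d 0 0 = a. Proof. by rewrite mxE. Qed.
Lemma mk01 a b c d : mk22 a b c d 0 1 = b. Proof. by rewrite mxE. Qed.
Lemma mk10 a b c d : mk22 a b c d 1 0 = c. Proof. by rewrite mxE. Qed.
Lemma mk11 a b c d : mk22 a b c d 1 1 = d. Proof. by rewrite mxE. Qed.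

Lemma mk22_eta (M : 'M[R]_2) : M = mk22 (M 0 0) (M 0 1) (M 1 0) (M 1 1).
Proof. by apply: mx22P; rewrite !mxE. Qed.

Definition eu t := mk22 1 t 0 1.
Definition el t := mk22 1 0 t 1.

Lemma mul_mk22 a b c d a' b' c' d' :
  mk22 a b c d *m mk22 a' b' c' d' = mk22 (a*a' + b*c') (a*b' + b*d') (c*a'+d*c') (c*b'+d*d').
Proof. by apply: mx22P; rewrite !mul22 !mxE. Qed.

Lemma det_mk22 a b c d : \det (mk22 a b c d) = a * d - b * c.
Proof. by rewrite det22 !mxE. Qed.

Lemma eu_peel t (M : 'M[R]_2) : eu (-t) *m (eu t *m M) = M.
Proof. rewrite [M]mk22_eta /eu !mul_mk22; congr mk22; ring. Qed.
Lemma el_peel t (M : 'M[R]_2) : el (-t) *m (el t *m M) = M.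
Proof. rewrite [M]mk22_eta /el !mul_mk22; congr mk22; ring. Qed.

Variable P : 'M[R]_2 -> Prop.
Hypothesis Pmul : forall M N, P M -> P N -> P (M *m N).
Hypothesis Peu : forall t, P (eu t).
Hypothesis Pel : forall t, P (el t).

Lemma peel_eu t (M : 'M[R]_2) : P (eu t *m M) -> P M.
Proof. by move=> h; rewrite -(eu_peel t M); apply: Pmul. Qed.
Lemma peel_el t (M : 'M[R]_2) : P (el t *m M) -> P M.
Proof. by move=> h; rewrite -(el_peel t M); apply: Pmul. Qed.

Lemma case_c0 (M : 'M[R]_2) : M 1 0 = 0 -> \det M = 1 -> P M.
Proof.
rewrite [M]mk22_eta !mxE /= => -> ; set a := M 0 0; set b := M 0 1; set d := M 1 1.
rewrite det_mk22 mulr0 subr0 => hd.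
apply: (@peel_el d); apply: (@peel_eu (1 - a)); apply: (@peel_el (-1)).
rewrite /eu /el !mul_mk22.
set N := mk22 _ _ _ _.
suff -> : N = eu (N 0 1) by [].
rewrite /N /eu !mxE /=; congr mk22.
- apply/eqP; rewrite -subr_eq0; apply/eqP.
  transitivity ((a*d-1)*(1-a)); first ring. by rewrite hd subrr mul0r.
- apply/eqP; rewrite -subr_eq0; apply/eqP.
  transitivity ((a*d-1)*a); first ring. by rewrite hd subrr mul0r.
- apply/eqP; rewrite -subr_eq0; apply/eqP.
  transitivity ((a*d-1)*(b+1)); first ring. by rewrite hd subrr mul0r.
Qed.

End Gen.

Section Main.
Variable q : nat.
Hypothesis hq : (1 < q)%N.
Local Notation R := 'Z_q.
Variable P : 'M[R]_2 -> Prop.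
Hypothesis Pmul : forall M N, P M -> P N -> P (M *m N).
Hypothesis Peu : forall t, P (eu t).
Hypothesis Pel : forall t, P (el t).

Lemma natrZ (x : R) : x = (val x)%:R.
Proof. by rewrite natr_Zp. Qed.

Lemma valnat (n : nat) : (n < q)%N -> val (n%:R : R) = n.
Proof. by move=> h; have := val_Zp_nat hq n; rewrite modn_small. Qed.

Lemma ltq (x : R) : (val x < q)%N.
Proof. by have := ltn_ord x; rewrite [X in (_ < X)%N -> _]Zp_cast. Qed.

Lemma det_eu (t : R) : \det (eu t) = 1.
Proof. by rewrite det_mk22 mulr1 mulr0 subr0. Qed.
Lemma det_el (t : R) : \det (el t) = 1.
Proof. by rewrite det_mk22 mulr1 mul0r subr0. Qed.

Lemma gen_all n : forall M : 'M[R]_2, leq (addn (val (M 0 0)) (val (M 1 0))).+1 n -> \det M = 1 -> P M.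
Proof.
elim: n => [//|n IH] M hn hdet.
have [c0|cpos] := posnP (val (M 1 0)).
  apply: (case_c0 Pmul Peu Pel) => //; by rewrite (natrZ (M 1 0)) c0.
have [a0|apos] := posnP (val (M 0 0)).
  apply: (@peel_eu _ P Pmul Peu 1); apply: (@peel_el _ P Pmul Pel (-1)).
  apply: (case_c0 Pmul Peu Pel).
    rewrite [M]mk22_eta /eu /el !mul_mk22 !mxE /= (natrZ (M 0 0)) a0; ring.
  by rewrite !det_mulmx det_eu det_el hdet !mul1r.
set va := val (M 0 0) in hn apos; set vc := val (M 1 0) in hn cpos.
have ea : M 0 0 = va%:R by rewrite {1}(natrZ (M 0 0)).
have ec : M 1 0 = vc%:R by rewrite {1}(natrZ (M 1 0)).
have [le|lt] := leqP vc va.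
  apply: (@peel_eu _ P Pmul Peu (- (va %/ vc)%:R)); apply: IH; last first.
    by rewrite det_mulmx det_eu hdet mul1r.
  rewrite [M]mk22_eta /eu !mul_mk22 mk00 mk10 -/va -/vc.
  have -> : 1 * M 0 0 + - (va %/ vc)%:R * M 1 0 = (va %% vc)%:R.
    rewrite ea ec {1}(divn_eq va vc) natrD natrM; ring.
  have -> : 0 * M 0 0 + 1 * M 1 0 = M 1 0 by ring.
  rewrite valnat; last by apply: ltn_trans (ltn_pmod _ cpos) (ltq (M 1 0)).
  rewrite -/vc; have := ltn_pmod va cpos; lia.
apply: (@peel_el _ P Pmul Pel (- (vc %/ va)%:R)); apply: IH; last first.
  by rewrite det_mulmx det_el hdet mul1r.
rewrite [M]mk22_eta /el !mul_mk22 mk00 mk10 -/va -/vc.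
have -> : - (vc %/ va)%:R * M 0 0 + 1 * M 1 0 = (vc %% va)%:R.
  rewrite ea ec {2}(divn_eq vc va) natrD natrM; ring.
have -> : 1 * M 0 0 + 0 * M 1 0 = M 0 0 by ring.
rewrite valnat; last by apply: ltn_trans (ltn_pmod _ apos) (ltq (M 0 0)).
rewrite -/va; have := ltn_pmod vc apos; lia.
Qed.

End Main.

Lemma gammaE a : gamma a = mk22 0 1 1 a%:Z.
Proof. by apply: mx22P; rewrite !mxE. Qed.

Lemma det_gamma2 a b : \det (gamma a *m gamma b) = 1.
Proof. by rewrite det_mulmx !gammaE !det_mk22; ring. Qed.

Lemma det_Gamma A g : in_GammaA A g -> \det g = 1.
Proof.
elim=> [a b _ _ | g1 h _ hg _ hh]; first exact: det_gamma2.
by rewrite det_mulmx hg hh mulr1.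
Qed.

Section Q.
Variable q : nat.
Hypothesis hq : (1 < q)%N.

Lemma red_mul g h : red_mod q (g *m h) = red_mod q g *m red_mod q h.
Proof. by rewrite /red_mod map_mxM. Qed.

Lemma red_det g : \det (red_mod q g) = ((\det g)%:~R).
Proof. by rewrite /red_mod det_map_mx. Qed.

Lemma red_mk22 a b c d : red_mod q (mk22 a b c d) = mk22 a%:~R b%:~R c%:~R d%:~R.
Proof. by apply: mx22P; rewrite !mxE. Qed.

End Q.

Section Fin.
Variable q : nat.
Hypothesis hq : (1 < q)%N.
Local Notation R := 'Z_q.

Lemma finite_order (x : 'M[R]_2) : \det x = 1 -> exists m, (0 < m)%N /\ x ^+ m = 1.
Proof.
move=> hx.
pose f := fun i : 'I_(#|{: 'M[R]_2}|.+1) => x ^+ i.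
have : ~~ injectiveb f.
  apply/negP => /injectiveP /leq_card; rewrite card_ord ltnn //.
case/injectivePn => i [j] hij; rewrite /f => e.
have xu : x \is a GRing.unit by rewrite unitmxE hx unitr1.
wlog lt : i j hij e / (i < j)%N.
  move=> W; case: (ltngtP i j) => h; first exact: (W i j).
    by apply: (W j i) => //; rewrite eq_sym.
  by case/eqP: hij; apply: val_inj.
exists (j - i)%N; split; first by rewrite subn_gt0.
apply: (mulrI (unitrX i xu)); rewrite -exprD subnKC ?(ltnW lt) // -e mulr1 //.
Qed.
End Fin.

Lemma eu_add (R : comNzRingType) (s t : R) : eu s *m eu t = eu (s + t).
Proof. rewrite /eu mul_mk22; congr mk22; ring. Qed.
Lemma el_add (R : comNzRingType) (s t : R) : el s *m el t = el (s + t).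
Proof. rewrite /el mul_mk22; congr mk22; ring. Qed.

Theorem lemmaB2 (A : nat -> Prop) :
  (forall a, A a -> (0 < a)%N) -> A 1%N -> A 2%N ->
  everywhere_strong_approx A.
Proof.
move=> _ A1 A2 q hq M; split; last first.
  by case=> g [hg <-]; rewrite red_det (det_Gamma hg).
move=> hM.
pose P := fun N : 'M['Z_q]_2 => exists g, in_GammaA A g /\ red_mod q g = N.
have Pmul : forall M N, P M -> P N -> P (M *m N).
  move=> M1 N1 [g [hg <-]] [h [hh <-]]; exists (g *m h); split.
    exact: GammaA_mul. by rewrite red_mul.
have PX : forall a b, A a -> A b -> P (red_mod q (gamma a *m gamma b)).
  by move=> a b ha hb; exists (gamma a *m gamma b); split => //; apply: GammaA_gen.
set x := red_mod q (gamma 1 *m gamma 1).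
have Px : forall k, P (x ^+ k.+1).
  elim=> [|k IH]; first by rewrite expr1; apply: PX.
  by rewrite exprSr; apply: Pmul => //; apply: PX.
have [m [m0 xm]] : exists m, (0 < m)%N /\ x ^+ m = 1.
  by apply: finite_order => //; rewrite red_det det_gamma2.
have x2m : x ^+ (2 * m).-1 * x = 1.
  by rewrite -exprSr prednK ?muln_gt0 // mulnC exprM xm expr1n.
have x2m' : x * x ^+ (2 * m).-1 = 1.
  by rewrite -exprS prednK ?muln_gt0 // mulnC exprM xm expr1n.
have pm : (2 * m).-1 = ((2 * m).-2).+1 by lia.
have Peu1 : P (eu 1).
  have -> : eu 1 = x ^+ (2 * m).-1 *m red_mod q (gamma 1 *m gamma 2).
    have -> : gamma 1 *m gamma 2 = (gamma 1 *m gamma 1) *m mk22 1 1 0 1.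
      by rewrite !gammaE !mul_mk22.
    rewrite red_mul red_mk22 -/x mulmxA.
    have -> : x ^+ (2 * m).-1 *m x = 1 by [].
    by rewrite mul1mx.
  by apply: Pmul; [rewrite pm; apply: Px | apply: PX].
have Pel1 : P (el 1).
  have -> : el 1 = red_mod q (gamma 2 *m gamma 1) *m x ^+ (2 * m).-1.
    have -> : gamma 2 *m gamma 1 = mk22 1 0 1 1 *m (gamma 1 *m gamma 1).
      by rewrite !gammaE !mul_mk22.
    rewrite red_mul red_mk22 -/x -mulmxA.
    have -> : x *m x ^+ (2 * m).-1 = 1 by [].
    by rewrite mulmx1.
  by apply: Pmul; [apply: PX | rewrite pm; apply: Px].
have q0 : (q%:R : 'Z_q) = 0.
  by apply: val_inj; rewrite /= val_Zp_nat // modnn.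
have tE : forall t : 'Z_q, t = (val t + q.-1).+1%:R.
  move=> t; rewrite -addnS prednK 1?ltnW // natrD q0 addr0.
  exact: natrZ.
have Peu : forall t, P (eu t).
  move=> t; rewrite [t]tE; elim: (val t + q.-1)%N => [//|n IH].
  by rewrite -nat1r -eu_add; apply: Pmul.
have Pel : forall t, P (el t).
  move=> t; rewrite [t]tE; elim: (val t + q.-1)%N => [//|n IH].
  by rewrite -nat1r -el_add; apply: Pmul.
by apply: (gen_all hq Pmul Peu Pel (n := (val (M 0 0) + val (M 1 0)).+1)).
Qed.
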